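(* Let $M\ge1$. There is an element-based generator $\mathds{G}$ (which may use $M$) such that, for any countable collection $\mathcal{L}$, target language $K\in\mathcal{L}$, and error parameter $\varepsilon\in(0,1)$ given to it, on any enumeration $x_{1:\infty}$ of $K$ with $o(1)$-noise rate and arbitrary omissions that is an $M$-bounded displacement enumeration with respect to $K$, the output $w_{1:\infty}$ of $\mathds{G}$ satisfies $\mu_{\rm low}(\{w_1,w_2,\dots\},K)\ge\frac{1-\varepsilon}{2M}$.
   Context: The universe is $U=\mathbb{N}$ with its natural order; a language is an infinite subset of $U$ with canonical enumeration $\ell_1<\ell_2<\cdots$; a collection is a countable family of languages. For $A,B\subseteq\mathbb{N}$ with $B=\{b_1<b_2<\cdots\}$, $\mu_{\rm low}(A,B)=\liminf_n\frac1n|A\cap\{b_1,\dots,b_n\}|$. For $x\in U$, $\sigma(x,L)=j$ if $x=\ell_j$ and $0$ if $x\notin L$; $x_{1:\infty}$ is an $M$-bounded displacement enumeration with respect to $L$ if there is $n^\star$ with $\sigma(x_n,L)\le Mn$ for all $n\ge n^\star$. An enumeration of $K$ with $o(1)$-noise and arbitrary omissions is a sequence of distinct elements listing each element of some infinite $\hat K\subseteq K$ exactly once, with $\frac1n|\{t\le n:x_t\notin\hat K\}|\to0$. An element-based generator outputs, from $x_1,\dots,x_n$ and knowledge of $\mathcal{L}$ (not $K$), an element $w_n\notin\{x_1,\dots,x_n,w_1,\dots,w_{n-1}\}$. *)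

(* Defs.v *)
From Stdlib Require Import Reals List ClassicalEpsilon.
From Coquelicot Require Import Coquelicot.
Open Scope R_scope.

Definition infinite_set (A : nat -> bool) : Prop :=
  forall N : nat, exists y : nat, (N <= y)%nat /\ A y = true.

Fixpoint cnt (A : nat -> bool) (n : nat) : nat :=
  match n with
  | O => O
  | S m => (cnt A m + (if A m then 1 else 0))%nat
  end.

Fixpoint cntP (P : nat -> Prop) (n : nat) : nat :=
  match n with
  | O => O
  | S m => (cntP P m + (if excluded_middle_informative (P m) then 1 else 0))%nat
  end.

(* sigma(x, L) = j if x = l_j (1-indexed canonical enumeration), 0 if x ∉ L *)
Definition sigma (x : nat) (L : nat -> bool) : nat :=
  if L x then S (cnt L x) else O.

(* kth B j = b_{j+1}, the (j+1)-th smallest element of B (0-indexed);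
   well defined (meaningful) when B is infinite. *)
Definition kth (B : nat -> bool) (j : nat) : nat :=
  epsilon (inhabits 0%nat) (fun y => B y = true /\ cnt B y = j).

Definition mu_low (A : nat -> Prop) (B : nat -> bool) : Rbar :=
  LimInf_seq (fun n => INR (cntP (fun j => A (kth B j)) n) / INR n).

(* Sequences are 0-indexed: x t stands for x_{t+1}. *)
Definition prefix (x : nat -> nat) (n : nat) : list nat := map x (seq 0 n).

Definition bounded_displacement (M : R) (x : nat -> nat) (L : nat -> bool) : Prop :=
  exists nstar : nat, forall t : nat, (nstar <= S t)%nat ->
    INR (sigma (x t) L) <= M * INR (S t).

Definition noisy_enumeration (x : nat -> nat) (K : nat -> bool) : Prop :=
  (forall s t : nat, x s = x t -> s = t) /\
  exists Khat : nat -> bool,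
    (forall y, Khat y = true -> K y = true) /\
    infinite_set Khat /\
    (forall y, Khat y = true -> exists t, x t = y) /\
    is_lim_seq (fun n => INR (cntP (fun t => Khat (x t) = false) n) / INR n) 0.

(* An element-based generator: given the collection L, the error parameter eps
   and the prefix x_1..x_n, outputs w_n.  Validity: w_n is not among
   x_1..x_n, w_1..w_{n-1}. *)
Definition generator := (nat -> nat -> bool) -> R -> list nat -> nat.

Definition gen_output (G : generator) (L : nat -> nat -> bool) (eps : R)
  (x : nat -> nat) (t : nat) : nat := G L eps (prefix x (S t)).

Definition valid_generator (G : generator) : Prop :=
  forall (L : nat -> nat -> bool) (eps : R) (x : nat -> nat) (t : nat),
    ~ In (gen_output G L eps x t) (prefix x (S t)) /\
    forall s : nat, (s < t)%nat -> gen_output G L eps x s <> gen_output G L eps x t.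

(* Main.v *)
Require Import Defs.
From Stdlib Require Import Reals List.
From Coquelicot Require Import Coquelicot.
From Stdlib Require Import Lia Lra Psatz ClassicalEpsilon Classical Arith.
Import ListNotations.
Open Scope R_scope.
Open Scope bool_scope.

Definition badl (L : nat -> nat -> bool) (p : list nat) (i : nat) : nat :=
  length (filter (fun y => negb (L i y)) p).
Definition candl (D : nat) (L : nat -> nat -> bool) (p : list nat) (i : nat) : bool :=
  Nat.leb ((badl L p i + 1) * D * 2 ^ (S i)) (length p).
Definition Jl (D : nat) (L : nat -> nat -> bool) (p : list nat) (y : nat) : bool :=
  forallb (fun i => implb (candl D L p i) (L i y)) (seq 0 (length p)).
Definition freshb (p used : list nat) (y : nat) : bool :=
  negb (existsb (Nat.eqb y) p) && negb (existsb (Nat.eqb y) used).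
Definition Pb D L p used y : bool := Jl D L p y && freshb p used y.

Definition choose (D : nat) (L : nat -> nat -> bool) (p used : list nat) : nat :=
  match excluded_middle_informative
          (exists y, Pb D L p used y = true /\ forall z, Pb D L p used z = true -> (y <= z)%nat) with
  | left H => proj1_sig (constructive_indefinite_description _ H)
  | right _ => S (list_max (p ++ used))
  end.

Fixpoint outs (D : nat) (L : nat -> nat -> bool) (l : list nat) (n : nat) : list nat :=
  match n with
  | O => nil
  | S k => outs D L l k ++ [choose D L (firstn (S k) l) (outs D L l k)]
  end.

Definition Dof (eps : R) : nat :=
  epsilon (inhabits 0%nat) (fun D => 1 <= eps * INR D).

Definition Gen : generator := fun L eps l => last (outs (Dof eps) L l (length l)) 0%nat.

Lemma choose_fresh D L p used :
  ~ In (choose D L p used) p /\ ~ In (choose D L p used) used.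
Proof.
  unfold choose. destruct excluded_middle_informative as [H|H].
  - pose proof (proj2_sig (constructive_indefinite_description _ H)) as [Hy _].
    set (y := proj1_sig (constructive_indefinite_description _ H)) in *. clearbody y.
    unfold Pb, freshb in Hy. apply andb_prop in Hy. destruct Hy as [_ Hy'].
    apply andb_prop in Hy'. destruct Hy' as [H1 H2]. apply Bool.negb_true_iff in H1, H2.
    split; intro Hin.
    + assert (existsb (Nat.eqb y) p = true) by (apply existsb_exists; exists y; split; auto; apply Nat.eqb_refl). congruence.
    + assert (existsb (Nat.eqb y) used = true) by (apply existsb_exists; exists y; split; auto; apply Nat.eqb_refl). congruence.
  - assert (Hm : forall z, In z (p ++ used) -> (z <= list_max (p ++ used))%nat).
    { intros z Hz. pose proof (proj1 (list_max_le (p++used) (list_max (p++used))) (le_n _)) as HF.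
      rewrite Forall_forall in HF. auto. }
    split; intro Hin.
    + assert (HH := Hm _ (in_or_app _ _ _ (or_introl Hin))). lia.
    + assert (HH := Hm _ (in_or_app _ _ _ (or_intror Hin))). lia.
Qed.

Lemma choose_min D L p used y :
  Pb D L p used y = true ->
  Pb D L p used (choose D L p used) = true /\ (choose D L p used <= y)%nat.
Proof.
  intros Hy.
  assert (Hex : exists y, Pb D L p used y = true /\ forall z, Pb D L p used z = true -> (y <= z)%nat).
  { clear - Hy. induction y as [y IH] using lt_wf_ind.
    destruct (classic (exists z, (z < y)%nat /\ Pb D L p used z = true)) as [[z [Hz1 Hz2]]|Hn].
    - exact (IH z Hz1 Hz2).
    - exists y. split; auto. intros z Hz. destruct (Nat.lt_ge_cases z y); auto.
      exfalso. apply Hn. eauto. }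
  unfold choose. destruct excluded_middle_informative as [H|H]; [|contradiction].
  pose proof (proj2_sig (constructive_indefinite_description _ H)) as [Hu1 Hu2]. auto.
Qed.

Definition prefix_firstn x k n : (k <= n)%nat -> firstn k (prefix x n) = prefix x k.
Proof.
  intros Hk. unfold prefix. rewrite firstn_map. f_equal.
  replace n with (k + (n - k))%nat by lia. rewrite seq_app. rewrite firstn_app.
  rewrite length_seq, Nat.sub_diag, firstn_O, app_nil_r. apply firstn_all2. rewrite length_seq; lia.
Qed.

Lemma outs_prefix D L x : forall k n, (k <= n)%nat -> outs D L (prefix x n) k = outs D L (prefix x k) k.
Proof.
  induction k; intros n Hk; [reflexivity|]. cbn [outs].
  rewrite (IHk n) by lia. rewrite (IHk (S k)) by lia.
  rewrite !prefix_firstn by lia. reflexivity.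
Qed.

Lemma prefix_length x n : length (prefix x n) = n.
Proof. unfold prefix. rewrite length_map, length_seq. reflexivity. Qed.

Lemma gen_output_step L eps x t :
  gen_output Gen L eps x t = choose (Dof eps) L (prefix x (S t)) (outs (Dof eps) L (prefix x t) t).
Proof.
  unfold gen_output, Gen. rewrite prefix_length. cbn [outs]. rewrite last_last.
  rewrite (outs_prefix _ _ _ t (S t)) by lia. rewrite prefix_firstn by lia. reflexivity.
Qed.

Lemma gen_output_eq L eps x t :
  gen_output Gen L eps x t =
  choose (Dof eps) L (prefix x (S t)) (map (gen_output Gen L eps x) (seq 0 t)).
Proof.
  assert (H : forall t, outs (Dof eps) L (prefix x t) t = map (gen_output Gen L eps x) (seq 0 t)).
  { induction t0; [reflexivity|]. cbn [outs].
    rewrite (outs_prefix _ _ _ t0 (S t0)) by lia. rewrite IHt0, seq_S, map_app.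
    rewrite prefix_firstn by lia. rewrite <- IHt0. rewrite <- gen_output_step. reflexivity. }
  rewrite gen_output_step. rewrite H. reflexivity.
Qed.

Lemma Gen_valid : valid_generator Gen.
Proof.
  intros L eps x t. rewrite gen_output_eq. destruct (choose_fresh (Dof eps) L (prefix x (S t)) (map (gen_output Gen L eps x) (seq 0 t))) as [H1 H2].
  split; auto. intros s Hs Heq. apply H2. rewrite <- Heq. apply in_map. apply in_seq. lia.
Qed.

Lemma cntP_eq P n : cntP P n = length (filter (fun j => if excluded_middle_informative (P j) then true else false) (seq 0 n)).
Proof.
  induction n; [reflexivity|]. rewrite seq_S, filter_app, length_app, <- IHn. cbn [cntP]. simpl.
  destruct excluded_middle_informative; simpl; lia.
Qed.

Lemma NoDup_le_cntP (P : nat -> Prop) n l : NoDup l -> (forall j, In j l -> (j < n)%nat /\ P j) -> (length l <= cntP P n)%nat.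
Proof.
  intros Hnd Hl. rewrite cntP_eq. apply NoDup_incl_length; auto.
  intros j Hj. destruct (Hl j Hj) as [H1 H2]. apply filter_In. split.
  - apply in_seq. lia.
  - destruct excluded_middle_informative; tauto.
Qed.

Lemma filter_split {A} (f g : A -> bool) l :
  length (filter f l) = (length (filter (fun a => f a && g a) l) + length (filter (fun a => f a && negb (g a)) l))%nat.
Proof. induction l; simpl; auto. destruct (f a), (g a); simpl; lia. Qed.

Lemma filter_three {A} (a1 a2 a3 : A -> bool) l :
  (length l <= length (filter (fun a => a1 a && a2 a && a3 a) l) + length (filter (fun a => negb (a1 a)) l)
     + length (filter (fun a => negb (a2 a)) l) + length (filter (fun a => negb (a3 a)) l))%nat.
Proof. induction l; simpl; auto. destruct (a1 a), (a2 a), (a3 a); simpl; lia. Qed.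

Lemma filter_and_le {A} (f g : A -> bool) l : (length (filter (fun a => f a && g a) l) <= length (filter g l))%nat.
Proof. induction l; simpl; auto. destruct (f a), (g a); simpl; lia. Qed.

Lemma filter_impl_le {A} (f g : A -> bool) l : (forall a, f a = true -> g a = true) -> (length (filter f l) <= length (filter g l))%nat.
Proof. intros H; induction l; simpl; auto. destruct (f a) eqn:E1; [rewrite (H a E1)|destruct (g a)]; simpl; lia. Qed.

Fixpoint sumI (I : list nat) (g : nat -> nat) : nat :=
  match I with [] => 0%nat | i :: I' => (g i + sumI I' g)%nat end.

Lemma sumI_plus I g h : sumI I (fun i => g i + h i)%nat = (sumI I g + sumI I h)%nat.
Proof. induction I; simpl; lia. Qed.

Lemma sumI_exists I (f : nat -> bool) : existsb f I = true -> (1 <= sumI I (fun i => if f i then 1 else 0))%nat.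
Proof. induction I; simpl; try discriminate. destruct (f a); simpl; intros; try lia. specialize (IHI H). lia. Qed.

Lemma union_bound (I l : list nat) (f : nat -> nat -> bool) :
  (length (filter (fun s => existsb (fun i => f i s) I) l) <= sumI I (fun i => length (filter (f i) l)))%nat.
Proof.
  induction l as [|s l IH]; simpl.
  - induction I; simpl; lia.
  - assert (E : sumI I (fun i => length (if f i s then s :: filter (f i) l else filter (f i) l))
               = (sumI I (fun i => if f i s then 1 else 0) + sumI I (fun i => length (filter (f i) l)))%nat).
    { rewrite <- sumI_plus. clear. induction I; simpl; auto. rewrite IHI. destruct (f a s); simpl; lia. }
    rewrite E. destruct (existsb (fun i => f i s) I) eqn:Ex; simpl.
    + pose proof (sumI_exists I (fun i => f i s) Ex). lia.
    + lia.
Qed.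

Lemma sumI_map_S l g : sumI (map S l) g = sumI l (fun i => g (S i)).
Proof. induction l; simpl; auto. Qed.

Lemma geom : forall n (a : nat -> nat) T, (forall i, (i < n)%nat -> (a i * 2 ^ (S i) <= T)%nat) -> (sumI (seq 0 n) a <= T)%nat.
Proof.
  induction n; intros a T H; simpl; [lia|].
  rewrite <- seq_shift, sumI_map_S.
  assert (H0 := H 0%nat ltac:(lia)). simpl in H0.
  assert (IH := IHn (fun i => a (S i)) (Nat.div2 T)).
  assert (Hd := Nat.div2_odd T).
  assert (sumI (seq 0 n) (fun i => a (S i)) <= Nat.div2 T)%nat.
  { apply IH. intros i Hi. specialize (H (S i) ltac:(lia)).
    rewrite Nat.pow_succ_r' in H. destruct (Nat.odd T); simpl in *; nia. }
  destruct (Nat.odd T); simpl in *; lia.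
Qed.

Lemma cnt_le_mono A a b : (a <= b)%nat -> (cnt A a <= cnt A b)%nat.
Proof. induction 1; simpl; auto. lia. Qed.

Lemma cnt_lt A a b : A a = true -> (a < b)%nat -> (cnt A a < cnt A b)%nat.
Proof. intros Ha Hab. pose proof (cnt_le_mono A (S a) b Hab). simpl in H. rewrite Ha in H. lia. Qed.

Lemma cnt_inj A a b : A a = true -> A b = true -> cnt A a = cnt A b -> a = b.
Proof.
  intros Ha Hb E. destruct (Nat.lt_trichotomy a b) as [H|[H|H]]; auto.
  - pose proof (cnt_lt A a b Ha H). lia.
  - pose proof (cnt_lt A b a Hb H). lia.
Qed.

Lemma kth_eq B v : B v = true -> kth B (cnt B v) = v.
Proof.
  intros Hv. unfold kth.
  assert (Hex : exists y, B y = true /\ cnt B y = cnt B v) by eauto.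
  destruct (epsilon_spec (inhabits 0%nat) _ Hex) as [H1 H2].
  apply cnt_inj with B; auto.
Qed.

Lemma filter_map_len {A} (f : nat -> A) (g : A -> bool) l :
  length (filter g (map f l)) = length (filter (fun r => g (f r)) l).
Proof. induction l; simpl; auto. destruct (g (f a)); simpl; auto. Qed.

Lemma filter_impl_le_in {A} (f g : A -> bool) l : (forall a, In a l -> f a = true -> g a = true) -> (length (filter f l) <= length (filter g l))%nat.
Proof. intros H; induction l; simpl; auto. simpl in H.
  destruct (f a) eqn:E1; [rewrite (H a (or_introl eq_refl) E1)|destruct (g a)]; simpl;
  (assert (length (filter f l) <= length (filter g l))%nat by (apply IHl; auto)); lia. Qed.

Lemma sumI_mult I g D : (sumI I g * D)%nat = sumI I (fun i => g i * D)%nat.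
Proof. induction I; simpl; lia. Qed.

Lemma badl_prefix L x s i : badl L (prefix x s) i = length (filter (fun r => negb (L i (x r))) (seq 0 s)).
Proof. unfold badl, prefix. apply (filter_map_len x (fun y => negb (L i y))). Qed.

Lemma E_bound D L x i : forall n,
  (length (filter (fun r => candl D L (prefix x r) i && negb (L i (x r))) (seq 0 n)) * (D * 2 ^ (S i)) <= n)%nat.
Proof.
  remember (2 ^ (S i))%nat as P.
  induction n; [simpl; lia|].
  rewrite seq_S, filter_app, length_app.
  pose proof (filter_and_le (fun r => candl D L (prefix x r) i) (fun r => negb (L i (x r))) (seq 0 n)) as H.
  remember (length (filter (fun r => candl D L (prefix x r) i && negb (L i (x r))) (seq 0 n))) as c.
  simpl filter.
  destruct (candl D L (prefix x n) i) eqn:Ec; destruct (L i (x n)) eqn:El; simpl; try nia.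
  unfold candl in Ec. apply Nat.leb_le in Ec. rewrite prefix_length, badl_prefix in Ec.
  rewrite <- HeqP in Ec. nia.
Qed.

Lemma U_bound D L x N :
  (length (filter (fun s => negb (Jl D L (prefix x s) (x s))) (seq 0 N)) * D <= N)%nat.
Proof.
  assert (H1 : (length (filter (fun s => negb (Jl D L (prefix x s) (x s))) (seq 0 N)) <=
     length (filter (fun s => existsb (fun i => candl D L (prefix x s) i && negb (L i (x s))) (seq 0 N)) (seq 0 N)))%nat).
  { apply filter_impl_le_in. intros s Hs Hn. apply in_seq in Hs.
    apply Bool.negb_true_iff in Hn. unfold Jl in Hn. rewrite prefix_length in Hn.
    apply existsb_exists.
    destruct (forallb (fun i => implb (candl D L (prefix x s) i) (L i (x s))) (seq 0 s)) eqn:Ef; [discriminate|].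
    apply Bool.not_true_iff_false in Ef. rewrite forallb_forall in Ef.
    apply not_all_ex_not in Ef. destruct Ef as [i Hi].
    apply imply_to_and in Hi. destruct Hi as [Hi1 Hi2].
    apply in_seq in Hi1. exists i. split; [apply in_seq; lia|].
    destruct (candl D L (prefix x s) i), (L i (x s)); simpl in *; tauto. }
  pose proof (union_bound (seq 0 N) (seq 0 N) (fun i s => candl D L (prefix x s) i && negb (L i (x s)))) as H2.
  simpl in H2.
  assert (H3 : (sumI (seq 0 N) (fun i => length (filter (fun s => candl D L (prefix x s) i && negb (L i (x s))) (seq 0 N))) * D <= N)%nat).
  { rewrite sumI_mult. apply geom. intros i _. pose proof (E_bound D L x i N). nia. }
  nia.
Qed.

Lemma liminf_ge (u : nat -> R) c :
  (forall eta, 0 < eta -> exists N, forall n, (N <= n)%nat -> c - eta <= u n) ->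
  Rbar_le (Finite c) (LimInf_seq u).
Proof.
  intros H. destruct (ex_LimInf_seq u) as [l Hl]. rewrite (is_LimInf_seq_unique _ _ Hl).
  destruct l as [l| |]; simpl in *.
  - destruct (Rle_or_lt c l) as [Hc|Hc]; auto. exfalso.
    assert (He : 0 < (c - l) / 2) by lra.
    destruct (Hl (mkposreal _ He)) as [H1 _]. simpl in H1.
    destruct (H ((c - l) / 4) ltac:(lra)) as [N HN].
    destruct (H1 N) as [n [Hn1 Hn2]]. specialize (HN n Hn1). lra.
  - exact I.
  - destruct (H (1/2) ltac:(lra)) as [N HN].
    destruct (Hl (c - 1) N) as [n [Hn1 Hn2]]. specialize (HN n Hn1). lra.
Qed.

Lemma noise_small (v : nat -> nat) :
  is_lim_seq (fun n => INR (v n) / INR n) 0 ->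
  forall r, 0 < r -> exists N, forall n, (N <= n)%nat -> INR (v n) <= r * INR n.
Proof.
  intros Hl r Hr. apply is_lim_seq_spec in Hl. destruct (Hl (mkposreal r Hr)) as [N HN].
  exists (S N). intros n Hn. specialize (HN n ltac:(lia)). simpl in HN.
  assert (Hn0 : 0 < INR n) by (apply lt_0_INR; lia).
  rewrite Rminus_0_r in HN. apply Rabs_def2 in HN as [HN _].
  apply Rmult_lt_compat_r with (r := INR n) in HN; auto.
  unfold Rdiv in HN. rewrite Rmult_assoc, Rinv_l in HN by lra. lra.
Qed.

Lemma Dof_spec eps : 0 < eps -> 1 <= eps * INR (Dof eps).
Proof.
  intros He. unfold Dof. apply epsilon_spec.
  assert (Hp : 0 <= / eps) by (left; apply Rinv_0_lt_compat; lra).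
  destruct (nfloor_ex (/ eps) Hp) as [n [_ Hn]].
  exists (S n). rewrite S_INR.
  apply Rmult_lt_compat_l with (r := eps) in Hn; auto. rewrite Rinv_r in Hn by lra. lra.
Qed.

Lemma count_shift (g : nat -> bool) T :
  (length (filter (fun t => g (S t)) (seq 0 T)) <= length (filter g (seq 0 (S T))))%nat.
Proof.
  replace (seq 0 (S T)) with (0%nat :: map S (seq 0 T)) by (simpl; rewrite seq_shift; reflexivity).
  cbn [filter]. pose proof (filter_map_len S g (seq 0 T)). destruct (g 0%nat); simpl; lia.
Qed.

Lemma count_lt t0 T : (length (filter (fun t => negb (t0 <=? t)%nat) (seq 0 T)) <= t0)%nat.
Proof.
  eapply Nat.le_trans; [apply (NoDup_incl_length (l := filter _ _) (l' := seq 0 t0))|rewrite length_seq; lia].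
  - apply NoDup_filter, seq_NoDup.
  - intros a Ha. apply filter_In in Ha as [Ha1 Ha2]. apply in_seq.
    apply Bool.negb_true_iff, Nat.leb_gt in Ha2. lia.
Qed.

Theorem theorem7p11 (M : R) (HM : 1 <= M) :
  exists G : generator, valid_generator G /\
    forall (L : nat -> nat -> bool) (K : nat -> bool) (eps : R) (x : nat -> nat),
      (forall i, infinite_set (L i)) ->
      (exists i, forall y, L i y = K y) ->
      0 < eps < 1 ->
      noisy_enumeration x K ->
      bounded_displacement M x K ->
      Rbar_le (Finite ((1 - eps) / (2 * M)))
              (mu_low (fun y => exists t, gen_output G L eps x t = y) K).
Proof.
  exists Gen. split; [exact Gen_valid|].
  intros L K eps x HLinf [istar HK] [He0 He1] [Hinj [Khat [HKh1 [HKh2 [HKh3 Hnoise]]]]] [nstar Hdisp].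
  pose proof (Dof_spec eps He0) as HD. set (D := Dof eps) in *.
  set (nz := fun n => cntP (fun t => Khat (x t) = false) n) in *.
  assert (HnzK : forall n, (length (filter (fun s => negb (K (x s))) (seq 0 n)) <= nz n)%nat).
  { intros n. unfold nz. rewrite cntP_eq. apply filter_impl_le. intros s Hs.
    destruct excluded_middle_informative as [_|Hn]; auto. exfalso. apply Hn.
    apply Bool.negb_true_iff in Hs. destruct (Khat (x s)) eqn:E; auto. rewrite (HKh1 _ E) in Hs. discriminate. }
  pose proof (noise_small nz Hnoise) as Hns.
  (* eventually the true language is a candidate *)
  assert (HDpos : (1 <= D)%nat).
  { destruct D; [simpl in HD; lra|lia]. }
  set (c := (D * 2 ^ (S istar))%nat).
  assert (Hc1 : (1 <= c)%nat). { unfold c. pose proof (Nat.pow_nonzero 2 (S istar) ltac:(lia)). nia. }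
  assert (Hcand : exists n1, forall s, (n1 <= s)%nat -> forall y, Jl D L (prefix x s) y = true -> K y = true).
  { assert (Hcp : 0 < INR c) by (apply lt_0_INR; lia).
    destruct (Hns (/ (2 * INR c)) ltac:(apply Rinv_0_lt_compat; lra)) as [N HN].
    exists (N + 2 * c + S istar)%nat. intros s Hs y Hy.
    unfold Jl in Hy. rewrite forallb_forall in Hy. rewrite prefix_length in Hy.
    specialize (Hy istar ltac:(apply in_seq; lia)).
    assert (Hca : candl D L (prefix x s) istar = true).
    { unfold candl. apply Nat.leb_le. rewrite prefix_length, badl_prefix.
      assert (Hb : (length (filter (fun r => negb (L istar (x r))) (seq 0 s)) <= nz s)%nat).
      { rewrite <- HnzK. apply Nat.eq_le_incl. f_equal. apply filter_ext. intros r. rewrite HK. reflexivity. }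
      specialize (HN s ltac:(lia)).
      apply le_INR in Hb.
      assert (Hs2 : INR (2 * c) <= INR s) by (apply le_INR; lia).
      rewrite mult_INR in Hs2. simpl in Hs2.
      apply INR_le. rewrite <- Nat.mul_assoc. fold c. rewrite mult_INR, plus_INR. simpl (INR 1).
      assert (H1 : INR (nz s) * INR c <= INR s / 2).
      { apply Rmult_le_compat_r with (r := INR c) in HN; [|lra].
        replace (/ (2 * INR c) * INR s * INR c) with (INR s / 2) in HN by (field; lra). lra. }
      assert (H2 : INR (length (filter (fun r => negb (L istar (x r))) (seq 0 s))) * INR c <= INR (nz s) * INR c)
        by (apply Rmult_le_compat_r; lra).
      replace (1 + 1) with 2 in Hs2 by lra. nra. }
    rewrite Hca in Hy. simpl in Hy. rewrite HK in Hy. exact Hy. }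
  destruct Hcand as [n1 Hn1].
  set (W := gen_output Gen L eps x) in *.
  assert (HWinj : forall a b, W a = W b -> a = b).
  { intros a b E. destruct (Nat.lt_trichotomy a b) as [H|[H|H]]; auto; exfalso.
    - exact (proj2 (Gen_valid L eps x b) a H E).
    - exact (proj2 (Gen_valid L eps x a) b H (eq_sym E)). }
  assert (Hmatch : forall t, Jl D L (prefix x (S t)) (x (S t)) = true ->
      existsb (fun t' => W t' =? x (S t))%nat (seq 0 t) = false ->
      Jl D L (prefix x (S t)) (W t) = true /\ (W t <= x (S t))%nat).
  { intros t HJ Hex.
    assert (HP : Pb D L (prefix x (S t)) (map W (seq 0 t)) (x (S t)) = true).
    { unfold Pb, freshb. rewrite HJ.
      assert (E1 : existsb (Nat.eqb (x (S t))) (prefix x (S t)) = false).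
      { apply Bool.not_true_iff_false. intros Hc. apply existsb_exists in Hc as [z [Hz1 Hz2]].
        apply Nat.eqb_eq in Hz2. unfold prefix in Hz1. apply in_map_iff in Hz1 as [r [Hr1 Hr2]].
        apply in_seq in Hr2. subst z. apply Hinj in Hz2. lia. }
      assert (E2 : existsb (Nat.eqb (x (S t))) (map W (seq 0 t)) = false).
      { rewrite <- Hex. clear. generalize (seq 0 t). intros l. induction l; simpl; auto. rewrite IHl, Nat.eqb_sym. reflexivity. }
      rewrite E1, E2. reflexivity. }
    destruct (choose_min _ _ _ _ _ HP) as [H1 H2].
    unfold W. rewrite gen_output_eq. fold D. fold W.
    unfold Pb in H1. apply andb_prop in H1. tauto. }
  set (t0 := (n1 + nstar)%nat).
  set (A := fun j => exists t, W t = kth K j).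
  assert (Hkey : forall m T, M * INR (S T) <= INR m ->
     (T <= 2 * cntP A m + t0 + nz (S T)
          + length (filter (fun s => negb (Jl D L (prefix x s) (x s))) (seq 0 (S T))))%nat).
  { intros m T HmT.
    set (f := fun t => (t0 <=? t)%nat && K (x (S t)) && Jl D L (prefix x (S t)) (x (S t))).
    set (g := fun t => existsb (fun t' => W t' =? x (S t))%nat (seq 0 t)).
    assert (Hf : forall t, In t (seq 0 T) -> f t = true -> K (x (S t)) = true /\
         Jl D L (prefix x (S t)) (x (S t)) = true /\ (cnt K (x (S t)) < m)%nat /\ (t0 <= t)%nat).
    { intros t Ht Hft. apply in_seq in Ht. unfold f in Hft.
      apply andb_prop in Hft as [Hft H3]. apply andb_prop in Hft as [H1 H2]. apply Nat.leb_le in H1.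
      repeat split; auto.
      specialize (Hdisp (S t) ltac:(unfold t0 in H1; lia)). unfold Defs.sigma in Hdisp. rewrite H2 in Hdisp.
      apply INR_lt.
      assert (INR (S (S t)) <= INR (S T)) by (apply le_INR; lia).
      rewrite S_INR in Hdisp.
      assert (M * INR (S (S t)) <= M * INR (S T)) by (apply Rmult_le_compat_l; lra). lra. }
    assert (Hf2 : forall t, In t (seq 0 T) -> f t && negb (g t) = true -> K (W t) = true /\ (cnt K (W t) < m)%nat).
    { intros t Ht H. apply andb_prop in H as [Hft Hg]. apply Bool.negb_true_iff in Hg.
      destruct (Hf t Ht Hft) as [Kx [HJ [Hlt Ht0]]].
      destruct (Hmatch t HJ Hg) as [HJW HWle].
      split.
      - apply (Hn1 (S t)); [unfold t0 in Ht0; lia|exact HJW].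
      - pose proof (cnt_le_mono K _ _ HWle). lia. }
    assert (H1 : (length (filter (fun t => f t && g t) (seq 0 T)) <= cntP A m)%nat).
    { rewrite <- (length_map (fun t => cnt K (x (S t)))). apply NoDup_le_cntP.
      - apply NoDup_map_NoDup_ForallPairs; [|apply NoDup_filter, seq_NoDup].
        intros a b Ha Hb E. apply filter_In in Ha as [Ha1 Ha2]. apply filter_In in Hb as [Hb1 Hb2].
        apply andb_prop in Ha2 as [Ha2 _]. apply andb_prop in Hb2 as [Hb2 _].
        destruct (Hf a Ha1 Ha2) as [Ka _]. destruct (Hf b Hb1 Hb2) as [Kb _].
        apply (cnt_inj K) in E; auto. apply Hinj in E. lia.
      - intros j Hj. apply in_map_iff in Hj as [t [Hj Ht]]. subst j.
        apply filter_In in Ht as [Ht1 Ht2]. apply andb_prop in Ht2 as [Hft Hgt].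
        destruct (Hf t Ht1 Hft) as [Kt [_ [Hlt _]]]. split; auto.
        unfold A. rewrite kth_eq by auto. unfold g in Hgt. apply existsb_exists in Hgt as [t' [_ Ht']].
        apply Nat.eqb_eq in Ht'. eauto. }
    assert (H2 : (length (filter (fun t => f t && negb (g t)) (seq 0 T)) <= cntP A m)%nat).
    { rewrite <- (length_map (fun t => cnt K (W t))). apply NoDup_le_cntP.
      - apply NoDup_map_NoDup_ForallPairs; [|apply NoDup_filter, seq_NoDup].
        intros a b Ha Hb E. apply filter_In in Ha as [Ha1 Ha2]. apply filter_In in Hb as [Hb1 Hb2].
        destruct (Hf2 a Ha1 Ha2) as [Ka _]. destruct (Hf2 b Hb1 Hb2) as [Kb _].
        apply (cnt_inj K) in E; auto.
      - intros j Hj. apply in_map_iff in Hj as [t [Hj Ht]]. subst j.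
        apply filter_In in Ht as [Ht1 Ht2].
        destruct (Hf2 t Ht1 Ht2) as [Kt Hlt]. split; auto.
        unfold A. rewrite kth_eq by auto. eauto. }
    pose proof (filter_split f g (seq 0 T)) as Hsplit.
    pose proof (filter_three (fun t => t0 <=? t)%nat (fun t => K (x (S t))) (fun t => Jl D L (prefix x (S t)) (x (S t))) (seq 0 T)) as H3.
    pose proof (count_lt t0 T) as H4.
    pose proof (count_shift (fun s => negb (K (x s))) T) as H5.
    pose proof (HnzK (S T)) as H6.
    pose proof (count_shift (fun s => negb (Jl D L (prefix x s) (x s))) T) as H7.
    rewrite length_seq in H3. cbv beta in *. fold f in H3. lia. }
  assert (Hfinal : forall eta, 0 < eta -> exists N, forall m, (N <= m)%nat ->
     (1 - eps) / (2 * M) - eta <= INR (cntP A m) / INR m).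
  { intros eta Heta.
    set (r := Rmin eta ((1 - eps) / 2)).
    assert (Hr0 : 0 < r) by (unfold r; apply Rmin_glb_lt; lra).
    assert (Hr1 : r <= eta) by apply Rmin_l.
    assert (Hr2 : r <= (1 - eps) / 2) by apply Rmin_r.
    destruct (Hns r Hr0) as [Nr HNr].
    assert (Ht0e : 0 <= (2 + INR t0) / eta).
    { apply Rdiv_le_0_compat; [pose proof (pos_INR t0); lra | lra]. }
    set (Q := M * (INR Nr + 1) + (2 + INR t0) / eta + 1).
    assert (HQ : 0 <= Q). { unfold Q. pose proof (pos_INR Nr). nra. }
    destruct (nfloor_ex Q HQ) as [nq [_ Hnq]].
    exists (S nq). intros m Hm.
    assert (Hm' : Q < INR m). { apply le_INR in Hm. rewrite S_INR in Hm. lra. }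
    assert (HMpos : 0 < M) by lra.
    set (mm := INR m) in *.
    assert (Hmm0 : 0 < mm). { unfold Q in Hm'. pose proof (pos_INR Nr). nra. }
    set (q := mm / M).
    assert (Hq0 : 0 <= q). { apply Rdiv_le_0_compat; lra. }
    assert (HqM : q * M = mm) by (unfold q; field; lra).
    assert (Hqmm : q <= mm) by nra.
    assert (Hdiv : (2 + INR t0) / eta * eta = 2 + INR t0) by (field; lra).
    assert (Hq1 : INR Nr + 1 < q).
    { apply Rmult_lt_reg_r with M; auto. rewrite HqM. unfold Q in Hm'. lra. }
    assert (Heta2 : 2 + INR t0 <= eta * mm).
    { assert ((2 + INR t0) / eta <= mm) by (unfold Q in Hm'; pose proof (pos_INR Nr); nra). nra. }
    destruct (nfloor_ex q Hq0) as [n0 [Hn0a Hn0b]].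
    assert (HNrn0 : (Nr < n0)%nat) by (apply INR_lt; lra).
    destruct n0 as [|T]; [lia|].
    assert (HmT : M * INR (S T) <= mm) by nra.
    pose proof (Hkey m T HmT) as HK1. apply le_INR in HK1.
    rewrite !plus_INR, mult_INR in HK1. simpl (INR 2) in HK1.
    pose proof (U_bound D L x (S T)) as HU. apply le_INR in HU. rewrite mult_INR in HU.
    pose proof (HNr (S T) ltac:(lia)) as HN3.
    set (C := INR (cntP A m)) in *.
    set (j := INR (length (filter (fun s => negb (Jl D L (prefix x s) (x s))) (seq 0 (S T))))) in *.
    set (n := INR (S T)) in *.
    assert (Hj0 : 0 <= j) by apply pos_INR.
    assert (Hj : j <= eps * n).
    { assert (j * 1 <= j * (eps * INR D)) by (apply Rmult_le_compat_l; lra). nra. }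
    assert (HnT : INR T = n - 1) by (unfold n; rewrite S_INR; lra).
    assert (Ha1 : (q - 1) * (1 - eps - r) <= n * (1 - eps - r)).
    { apply Rmult_le_compat_r; lra. }
    assert (Ha2 : q * r <= mm * eta) by (apply Rmult_le_compat; lra).
    assert (Hgoal : q * (1 - eps) / 2 - eta * mm <= C).
    { pose proof (pos_INR t0). nra. }
    apply Rmult_le_reg_r with mm; auto.
    replace (((1 - eps) / (2 * M) - eta) * mm) with (q * (1 - eps) / 2 - eta * mm) by (unfold q; field; lra).
    replace (C / mm * mm) with C by (field; lra). exact Hgoal. }
  unfold mu_low. fold W. apply liminf_ge. exact Hfinal.
Qed.
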